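(* For every integer $n\geq 0$, \[ \overline{C}(0,3,3n+2)=\overline{C}(1,3,3n+2)=\overline{C}(2,3,3n+2)=\frac{\overline{a}(3n+2)}{3}\equiv 0\pmod 2 . \]
   Context: An overpartition is a partition in which the first occurrence of each distinct part size may be overlined; $\ell(\pi)$ counts all parts (overlined and non-overlined). An overcubic partition of $n$ is a pair $(\pi_r,\pi_b)$ of overpartitions, with $\pi_b$ having only even parts, and total sum of parts $n$; $\overline{a}(n)$ denotes their number, so $\sum_n \overline{a}(n)q^n=\prod_{k\ge1}\frac{(1+q^k)(1+q^{2k})}{(1-q^k)(1-q^{2k})}$. The crank of such a pair is $r_c=\ell(\pi_r^{e})-\ell(\pi_b)$, where $\pi_r^{e}$ consists of the even parts of $\pi_r$. $\overline{C}(i,3,n)$ denotes the number of overcubic partitions of $n$ with $r_c\equiv i\pmod 3$. *)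

(* Defs.v *)
From mathcomp Require Import all_boot all_order all_algebra.
Set Implicit Arguments. Unset Strict Implicit. Unset Printing Implicit Defensive.
Import GRing.Theory Num.Theory.

(* An overpartition whose parts are at most n, in multiplicity form:
   for i : 'I_n, (f i).1 is the number of parts equal to i.+1 and
   (f i).2 says whether the first occurrence of the part i.+1 is overlined. *)
Definition ovp (n : nat) := {ffun 'I_n -> 'I_n.+1 * bool}.

Definition ovp_valid n (f : ovp n) : bool :=
  [forall i, (f i).2 ==> (0 < (f i).1)%N].

Definition ovp_weight n (f : ovp n) : nat := (\sum_(i < n) i.+1 * (f i).1)%N.

Definition ovp_len n (f : ovp n) : nat := (\sum_(i < n) (f i).1)%N.

(* number of even parts, i.e. l(pi^e); the part i.+1 is even iff i is odd *)
Definition ovp_even_len n (f : ovp n) : nat :=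
  (\sum_(i < n | odd i) (f i).1)%N.

Definition ovp_only_even n (f : ovp n) : bool :=
  [forall i : 'I_n, ~~ odd i ==> (nat_of_ord (f i).1 == 0%N)].

Definition overcubic (n : nat) (p : ovp n * ovp n) : bool :=
  [&& ovp_valid p.1, ovp_valid p.2, ovp_only_even p.2
    & ovp_weight p.1 + ovp_weight p.2 == n]%N.

Definition abar (n : nat) : nat := #|[set p : ovp n * ovp n | overcubic p]|.

Definition crank n (p : ovp n * ovp n) : int :=
  ((ovp_even_len p.1)%:Z - (ovp_len p.2)%:Z)%R.

Definition Cbar (i : int) (m n : nat) : nat :=
  #|[set p : ovp n * ovp n | overcubic p & (crank p == i %[mod m%:Z])%Z]|.

(* Main.v *)
Require Import Defs.
From mathcomp Require Import all_boot all_order all_algebra all_field.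
From mathcomp Require Import ring zify.
Set Implicit Arguments. Unset Strict Implicit. Unset Printing Implicit Defensive.
Import GRing.Theory Num.Theory.
Local Open Scope ring_scope.

Definition eqt (R : nzRingType) (N : nat) (p q : {poly R}) :=
  forall j, (j <= N)%N -> p`_j = q`_j.

Lemma eqt_refl (R : nzRingType) N (p : {poly R}) : eqt N p p.
Proof. by []. Qed.
Lemma eqt_sym (R : nzRingType) N (p q : {poly R}) : eqt N p q -> eqt N q p.
Proof. by move=> h j hj; rewrite h. Qed.
Lemma eqt_trans (R : nzRingType) N (p q r : {poly R}) :
  eqt N p q -> eqt N q r -> eqt N p r.
Proof. by move=> h1 h2 j hj; rewrite h1 // h2. Qed.
Lemma eqt_le (R : nzRingType) N M (p q : {poly R}) :
  (M <= N)%N -> eqt N p q -> eqt M p q.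
Proof. by move=> hM h j hj; apply: h; apply: leq_trans hM. Qed.

Lemma eqtM (R : nzRingType) N (p p' q q' : {poly R}) :
  eqt N p p' -> eqt N q q' -> eqt N (p * q) (p' * q').
Proof.
move=> h1 h2 j hj; rewrite !coefM; apply: eq_bigr => i _.
rewrite h1 ?h2 //; first by apply: leq_trans (leq_subr _ _) hj.
by apply: leq_trans hj; rewrite -ltnS.
Qed.

Lemma eqtD (R : nzRingType) N (p p' q q' : {poly R}) :
  eqt N p p' -> eqt N q q' -> eqt N (p + q) (p' + q').
Proof. by move=> h1 h2 j hj; rewrite !coefD h1 ?h2. Qed.

Lemma eqt_prod (R : comNzRingType) N (I : Type) (r : seq I) (P : pred I)
   (F G : I -> {poly R}) :
  (forall i, P i -> eqt N (F i) (G i)) ->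
  eqt N (\prod_(i <- r | P i) F i) (\prod_(i <- r | P i) G i).
Proof.
move=> h; apply: (big_ind2 (fun a b => eqt N a b)) => //.
by move=> ? ? ? ? ? ?; apply: eqtM.
Qed.

Lemma eqt_Xn0 (R : nzRingType) N m (p : {poly R}) :
  (N < m)%N -> eqt N ('X^m * p) 0.
Proof.
move=> hm j hj; rewrite coefXnM coef0.
by rewrite (leq_ltn_trans hj hm).
Qed.

Lemma eqt_shift (R : nzRingType) N e (p q : {poly R}) :
  eqt N p q -> eqt (N + e) ('X^e * p) ('X^e * q).
Proof.
move=> h j hj; rewrite !coefXnM; case: ltnP => // hej.
by apply: h; rewrite leq_subLR addnC.
Qed.

Lemma eqt_cancel (R : idomainType) N (p q d : {poly R}) :
  d`_0 = 1 -> eqt N (p * d) (q * d) -> eqt N p q.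
Proof.
move=> d0 h.
suff H : forall j, (j <= N)%N -> forall i, (i <= j)%N -> p`_i = q`_i.
  by move=> j hj; apply: (H j hj).
elim=> [|j IH] hj i hi.
  have := h 0%N (leq0n _); rewrite !coefM !big_ord1 subnn d0 !mulr1.
  by move: hi; rewrite leqn0 => /eqP->.
rewrite leq_eqVlt in hi; case/orP: hi => [/eqP ->|hi]; last first.
  by apply: IH => //; apply: ltnW.
have := h j.+1 hj; rewrite !coefM big_ord_recr /= [X in _ = X -> _]big_ord_recr /=.
rewrite subnn d0 !mulr1.
set A := (X in X + _ = _ -> _); set B := (X in _ = X + _ -> _).
have -> : A = B.
  rewrite /A /B; apply: eq_bigr => k _; rewrite /= IH //; first by apply: ltnW.
  by rewrite -ltnS.
by move/addrI.
Qed.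

Definition gser (R : nzRingType) (N : nat) (u : R) :=
  \sum_(a < N.+1) (if nat_of_ord a == 0%N then 1 else 2%:R) * u ^+ a.

Lemma gser_mul (R : comNzRingType) N (u : R) :
  (1 - u) * gser N u = 1 + u - 2%:R * u ^+ N.+1.
Proof.
elim: N => [|N IH].
  by rewrite /gser big_ord1 /= mul1r expr0 mulr1 expr1 mulr2n mulrDl mul1r opprD addrA addrK.
rewrite /gser big_ord_recr /= -/(gser N u) mulrDr IH.
rewrite !exprS; set v := u ^+ N. 
ring.
Qed.

Lemma eqt_gser (R : comNzRingType) N (c : R) k :
  (0 < k)%N -> eqt N ((1 - c%:P * 'X^k) * gser N (c%:P * 'X^k)) (1 + c%:P * 'X^k).
Proof.
move=> k0; rewrite gser_mul.
set u := _ * 'X^k.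
have -> : 1 + u - 2%:R * u ^+ N.+1 = (1 + u) + 'X^(k * N.+1) * (- (2%:R * c%:P ^+ N.+1)).
  rewrite /u exprMn exprM. ring.
rewrite -[X in eqt _ _ X]addr0; apply: eqtD => //; apply: eqt_Xn0.
by apply: (leq_trans (ltnSn N)); rewrite leq_pmull.
Qed.

Lemma eqt_prod_ext (R : comNzRingType) N M (F : nat -> {poly R}) :
  (N <= M)%N -> (forall i, (N <= i)%N -> eqt N (F i) 1) ->
  eqt N (\prod_(i < M) F i) (\prod_(i < N) F i).
Proof.
move=> hNM hF; elim: M hNM => [|M IH].
  by rewrite leqn0 => /eqP ->.
rewrite leq_eqVlt => /orP [/eqP <- //|]; rewrite ltnS => hM.
rewrite big_ord_recr /= -[X in eqt _ _ X]mulr1; apply: eqtM; first exact: IH.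
exact: hF.
Qed.

Lemma prod_split2 (R : comNzRingType) r (F : nat -> R) :
  \prod_(i < r.*2) F i = \prod_(i < r) F i.*2 * \prod_(i < r) F i.*2.+1.
Proof.
elim: r => [|r IH]; first by rewrite !big_ord0 mulr1.
rewrite doubleS !big_ord_recr /= IH; ring.
Qed.

Lemma coef0_prod (R : comNzRingType) (I : Type) (r : seq I) (P : pred I) (F : I -> {poly R}) :
  (\prod_(i <- r | P i) F i)`_0 = \prod_(i <- r | P i) (F i)`_0.
Proof. by rewrite -horner_coef0 horner_prod; apply: eq_bigr => i _; rewrite horner_coef0. Qed.

Fixpoint qb (R : nzRingType) (t : R) (i j : nat) {struct i} : R :=
  match i with
  | 0 => 1
  | i'.+1 => (fix g (j : nat) : R :=
                match j with 0 => 1 | j'.+1 => qb t i' j + t ^+ i * g j' end) j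
  end.

Arguments qb : simpl never.

Lemma qb0j (R : nzRingType) (t : R) j : qb t 0 j = 1. Proof. by []. Qed.
Lemma qbi0 (R : nzRingType) (t : R) i : qb t i 0 = 1. Proof. by case: i => //= i; rewrite /qb. Qed.
Lemma qbSS (R : nzRingType) (t : R) i j :
  qb t i.+1 j.+1 = qb t i j.+1 + t ^+ i.+1 * qb t i.+1 j.
Proof. by rewrite /qb. Qed.

Definition poch (R : nzRingType) (t : R) n := \prod_(j < n) (1 - t ^+ j.+1).

Lemma pochS (R : comNzRingType) (t : R) n : poch t n.+1 = poch t n * (1 - t ^+ n.+1).
Proof. by rewrite /poch big_ord_recr. Qed.

Lemma qb_poch (R : comNzRingType) (t : R) i j :
  qb t i j * poch t i * poch t j = poch t (i + j).
Proof.
elim: i j => [|i IHi] j; first by rewrite qb0j /poch big_ord0 !mul1r.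
elim: j => [|j IHj]; first by rewrite qbi0 /poch big_ord0 mul1r mulr1 addn0.
rewrite qbSS.
have e1 := IHi j.+1; have e2 := IHj.
rewrite addnS in e1; rewrite addSn in e2.
have -> : (qb t i j.+1 + t ^+ i.+1 * qb t i.+1 j) * poch t i.+1 * poch t j.+1 =
  (qb t i j.+1 * poch t i * poch t j.+1) * (1 - t ^+ i.+1) +
  t ^+ i.+1 * (qb t i.+1 j * poch t i.+1 * poch t j) * (1 - t ^+ j.+1).
  rewrite !pochS; ring.
rewrite e1 e2 addSn addnS [in RHS]pochS.
have -> : t ^+ (i + j).+2 = t ^+ i.+1 * t ^+ j.+1 by rewrite -exprD addSn addnS.
ring.
Qed.


Lemma cauchy (R : comNzRingType) (t y : R) M : forall x,
  \prod_(j < M) (y + x * t ^+ j) =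
  \sum_(k < M.+1) qb t k (M - k) * t ^+ 'C(k, 2) * x ^+ k * y ^+ (M - k).
Proof.
elim: M => [|M IH] x.
  by rewrite big_ord0 big_ord1 /= !expr0 !mulr1.
rewrite big_ord_recl /= expr0 mulr1.
have -> : \prod_(i < M) (y + x * t ^+ (bump 0 i)) = \prod_(i < M) (y + (x * t) * t ^+ i).
  by apply: eq_bigr => i _; rewrite /bump /= add1n exprS mulrA.
rewrite IH.
set a := fun k : nat => qb t k (M - k) * t ^+ 'C(k, 2) * (x * t) ^+ k * y ^+ (M - k).
have hb : forall k : 'I_M.+1,
   qb t (bump 0 k) (M.+1 - bump 0 k) * t ^+ 'C(bump 0 k, 2) * x ^+ (bump 0 k) * y ^+ (M.+1 - bump 0 k)
   = x * a k + (if (k < M)%N then y * a k.+1 else 0).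
  move=> [k hk] /=; rewrite /bump /= add1n subSS /a.
  case: ltnP => hkM.
    have -> : (M - k = (M - k.+1).+1)%N by rewrite subnS prednK // subn_gt0.
    rewrite qbSS binS bin1 exprD exprMn exprS.
    have -> : ((M - k.+1).+1 = (M - k.+1) + 1)%N by rewrite addn1.
    rewrite exprD expr1 !exprS !exprMn; ring.
  have ekM : k = M by apply/eqP; rewrite eqn_leq hkM -ltnS hk.
  rewrite ekM subnn !qbi0 binS bin1 exprD exprMn exprS; ring.
rewrite [RHS]big_ord_recl /= (eq_bigr _ (fun k _ => hb k)) big_split /=.
rewrite [X in _ + (_ + X)]big_ord_recr /= ltnn addr0.
rewrite qb0j bin0n subn0 !expr0 !mul1r.
have -> : \sum_(k < M.+1) qb t k (M - k) * t ^+ 'C(k, 2) * (x * t) ^+ k * y ^+ (M - k)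
   = \sum_(k < M.+1) a k by [].
rewrite -mulr_sumr big_ord_recl /=.
have -> : a 0%N = y ^+ M by rewrite /a /= qb0j subn0 !expr0 !mul1r.
have -> : \sum_(i < M) (if (i < M)%N then y * a i.+1 else 0) = y * \sum_(i < M) a (bump 0 i).
  rewrite mulr_sumr; apply: eq_bigr => i _; rewrite ltn_ord /bump /= add1n //.
rewrite exprS; ring.
Qed.

Lemma bin2_double k : ('C(k, 2) * 2 = k * k.-1)%N.
Proof.
elim: k => [|k IH] //; rewrite binS bin1 mulnDl IH.
case: k {IH} => [|k] //=; lia.
Qed.

Lemma sum_double s : (\sum_(i < s.+1) i.*2 = s * s.+1)%N.
Proof. elim: s => [|n IH]; first by rewrite big_ord1.
rewrite big_ord_recr /= IH; lia. Qed.

Definition dist (a b : nat) : nat := ((a - b) + (b - a))%N.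

Lemma jtp_exact (R : idomainType) s :
  let r := s.+1 in
  (\prod_(j < r) (1 + 'X^(j.*2.+1) : {poly R})) ^+ 2 =
  \sum_(k < r.*2.+1) qb ('X^2 : {poly R}) k (r.*2 - k) * 'X^((dist k r) ^ 2).
Proof.
move=> r.
have C := cauchy ('X^2 : {poly R}) ('X^(s.*2.+1)) r.*2 1.
set E := (s * s.+1 + s.+1 * s.*2.+1)%N.
have hR : \sum_(k < r.*2.+1) qb ('X^2 : {poly R}) k (r.*2 - k) * ('X^2) ^+ 'C(k, 2) * 1 ^+ k * ('X^(s.*2.+1)) ^+ (r.*2 - k)
   = 'X^E * \sum_(k < r.*2.+1) qb ('X^2 : {poly R}) k (r.*2 - k) * 'X^((dist k r) ^ 2).
  rewrite mulr_sumr; apply: eq_bigr => [[k hk]] _ /=.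
  rewrite expr1n mulr1 -!exprM -mulrA -exprD mulrCA -exprD; congr (_ * 'X^_).
  have := bin2_double k; rewrite /E /dist /r; move: hk; rewrite /r ltnS => hk.
  rewrite -!muln2. nia.
have hL : \prod_(j < r.*2) ('X^(s.*2.+1) + 1 * ('X^2 : {poly R}) ^+ j) =
   'X^E * (\prod_(j < r) (1 + 'X^(j.*2.+1) : {poly R})) ^+ 2.
  rewrite -addnn big_split_ord /=.
  have h1 : \prod_(i < r) ('X^(s.*2.+1) + 1 * ('X^2 : {poly R}) ^+ (lshift r i))
      = 'X^(s * s.+1) * \prod_(j < r) (1 + 'X^(j.*2.+1) : {poly R}).
    have -> : \prod_(i < r) ('X^(s.*2.+1) + 1 * ('X^2 : {poly R}) ^+ (lshift r i))
        = \prod_(i < r) ('X^(i.*2) * (1 + 'X^((s - i).*2.+1))).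
      apply: eq_bigr => [[i hi]] _ /=; rewrite mul1r -exprM mul2n mulrDr mulr1 -exprD.
      rewrite addrC; congr (_ + 'X^_); move: hi; rewrite /r ltnS => hi. lia.
    rewrite big_split /= prodrXr; congr (_ * _).
      by rewrite /r sum_double.
    rewrite -(big_mkord xpredT (fun i => 1 + 'X^((s - i).*2.+1))).
    rewrite -(big_mkord xpredT (fun j => 1 + 'X^(j.*2.+1))).
    rewrite big_nat_rev /=; apply: eq_big_nat => i /andP [_ hi].
    by rewrite add0n /r subSS subKn // -ltnS.
  have h2 : \prod_(i < r) ('X^(s.*2.+1) + 1 * ('X^2 : {poly R}) ^+ (rshift r i))
      = 'X^(s.+1 * s.*2.+1) * \prod_(j < r) (1 + 'X^(j.*2.+1) : {poly R}).
    have -> : \prod_(i < r) ('X^(s.*2.+1) + 1 * ('X^2 : {poly R}) ^+ (rshift r i))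
        = \prod_(i < r) ('X^(s.*2.+1) * (1 + 'X^(i.*2.+1))).
      apply: eq_bigr => [[i hi]] _ /=; rewrite mul1r -exprM mul2n mulrDr mulr1 -exprD.
      congr (_ + 'X^_); rewrite /r; lia.
    rewrite big_split /= prodr_const card_ord -exprM mulnC //.
  rewrite h1 h2 /E exprD; ring.
have e : 'X^E * (\prod_(j < r) (1 + 'X^(j.*2.+1) : {poly R})) ^+ 2 =
   'X^E * \sum_(k < r.*2.+1) qb ('X^2 : {poly R}) k (r.*2 - k) * 'X^((dist k r) ^ 2).
  by rewrite -hL -hR C.
apply: (mulfI _ e); rewrite expf_neq0 // polyX_eq0 //.
Qed.

Lemma eqt_1X (R : comNzRingType) L m : (L < m)%N -> eqt L (1 - 'X^m : {poly R}) 1.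
Proof.
move=> h; have -> : (1 - 'X^m : {poly R}) = 1 + 'X^m * (-1) by ring.
rewrite -[X in eqt _ _ X]addr0; apply: eqtD => //; exact: eqt_Xn0.
Qed.

Lemma poch_ext (R : comNzRingType) a b : (a <= b)%N ->
  eqt a.*2.+1 (poch ('X^2 : {poly R}) b) (poch 'X^2 a).
Proof.
elim: b => [|b IH]; first by rewrite leqn0 => /eqP ->.
rewrite leq_eqVlt => /orP [/eqP <- //|]; rewrite ltnS => h.
rewrite pochS -[X in eqt _ _ X]mulr1; apply: eqtM; first exact: IH.
rewrite -exprM; apply: eqt_1X; lia.
Qed.

Lemma poch0 (R : comNzRingType) (n : nat) : (poch ('X^2 : {poly R}) n)`_0 = 1.
Proof.
rewrite /poch coef0_prod; apply: big1 => i _.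
by rewrite coefB coef1 -exprM coefXn /= subr0.
Qed.

Lemma qb_trunc (R : idomainType) M k : (k <= M)%N ->
  eqt (minn k (M - k)).*2.+1 (qb ('X^2 : {poly R}) k (M - k) * poch 'X^2 M) 1.
Proof.
move=> hk; set L := _.+1.
apply: (@eqt_cancel _ _ _ _ (poch 'X^2 M)); first exact: poch0.
have e := qb_poch ('X^2 : {poly R}) k (M - k); rewrite subnKC // in e.
apply: (@eqt_trans _ _ _ (qb ('X^2 : {poly R}) k (M - k) * (poch 'X^2 k * poch 'X^2 (M - k)))).
  rewrite -mulrA; apply: eqtM => //; apply: eqtM.
    by apply: eqt_le (poch_ext _ hk); rewrite /L ltnS leq_double geq_minl.
  by apply: eqt_le (poch_ext _ (leq_subr k M)); rewrite /L ltnS leq_double geq_minr.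
by rewrite mulrA e mul1r.
Qed.

Lemma eqt_sum (R : nzRingType) N (I : Type) (r : seq I) (P : pred I)
   (F G : I -> {poly R}) :
  (forall i, P i -> eqt N (F i) (G i)) ->
  eqt N (\sum_(i <- r | P i) F i) (\sum_(i <- r | P i) G i).
Proof.
move=> h; apply: (big_ind2 (fun a b => eqt N a b)) => //.
by move=> ? ? ? ? ? ?; apply: eqtD.
Qed.

Definition Phi (R : nzRingType) r : {poly R} := \sum_(k < r.*2.+1) 'X^((dist k r) ^ 2).
Definition Aq (R : nzRingType) r : {poly R} := \prod_(j < r) (1 + 'X^(j.*2.+1)).
Definition Bq (R : nzRingType) r : {poly R} := \prod_(j < r) (1 - 'X^(j.*2.+1)).
Definition Ep (R : nzRingType) r : {poly R} := \prod_(j < r) (1 + 'X^(j.*2.+2)).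
Definition Em (R : nzRingType) r : {poly R} := \prod_(j < r) (1 - 'X^(j.*2.+2)).

Lemma phi_trunc (R : idomainType) N s : (N <= s.+1.*2)%N ->
  eqt N (Aq R s.+1 ^+ 2 * poch 'X^2 s.+1.*2) (Phi R s.+1).
Proof.
move=> hN; rewrite /Aq jtp_exact /Phi mulr_suml; apply: eqt_sum => [[k hk]] _ /=.
rewrite mulrAC mulrC.
have := eqt_shift (e := ((dist k s.+1) ^ 2)%N) (@qb_trunc R s.+1.*2 k hk).
rewrite mulr1 => h; apply: (eqt_le _ h).
move: hk hN; rewrite /dist ltnS => hk hN; nia.
Qed.

Lemma Em_poch (R : comNzRingType) r : Em R r = poch 'X^2 r.
Proof. by apply: eq_bigr => j _; rewrite -exprM mul2n. Qed.

Lemma ABEE (R : comNzRingType) r :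
  Aq R r * Bq R r * Ep R r * Em R r = poch 'X^2 r.*2.
Proof.
rewrite /poch (prod_split2 r (fun j => 1 - ('X^2 : {poly R}) ^+ j.+1)) -mulrA /Aq /Bq /Ep /Em -!big_split /=.
apply: eq_bigr => j _; rewrite -!exprM.
have -> : (2 * j.*2.+1 = j.*2.+1 + j.*2.+1)%N by lia.
have -> : (2 * j.*2.+2 = j.*2.+2 + j.*2.+2)%N by lia.
rewrite !exprD; ring.
Qed.

Lemma star (R : idomainType) N s : (N <= s.+1.*2)%N ->
  eqt N (Phi R s.+1 * Bq R s.+1 * Ep R s.+1) (Aq R s.+1 * Em R s.+1).
Proof.
move=> hN; set r := s.+1.
apply: (@eqt_cancel _ _ _ _ (Em R r)); first by rewrite Em_poch poch0.
apply: (@eqt_trans _ _ _ (Aq R r ^+ 2 * poch 'X^2 r.*2 * Bq R r * Ep R r * Em R r)).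
  do 3 (apply: eqtM; last exact: eqt_refl).
  by apply: eqt_sym; apply: phi_trunc.
have -> : Aq R r ^+ 2 * poch 'X^2 r.*2 * Bq R r * Ep R r * Em R r =
   Aq R r * poch 'X^2 r.*2 * (Aq R r * Bq R r * Ep R r * Em R r) by ring.
rewrite ABEE -!mulrA; apply: eqtM; first exact: eqt_refl. rewrite Em_poch.
have h : eqt N (poch ('X^2 : {poly R}) r.*2) (poch 'X^2 r).
  apply: (eqt_le _ (poch_ext _ _)); first by apply: leq_trans hN _.
  by rewrite -addnn leq_addr.
exact: eqtM.
Qed.


Definition Qf (R : nzRingType) (w : R) N i : {poly R} :=
  if odd i then gser N (w%:P * 'X^(i.+1)) * gser N ((w ^+ 2)%:P * 'X^(i.+1))
  else gser N (1%:P * 'X^(i.+1)).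
Definition Wf (R : nzRingType) N i : {poly R} :=
  if odd i then gser N (1%:P * 'X^(3 * i.+1)) else 1.
Definition Df (R : nzRingType) i : {poly R} :=
  if odd i then (1 - 'X^(3 * i.+1)) * (1 + 'X^(i.+1)) else 1 - 'X^(i.+1).
Definition sigf (R : nzRingType) i : {poly R} :=
  if odd i then 1 + 'X^(i.+1) else 1 - 'X^(i.+1).
Definition tauf (R : nzRingType) i : {poly R} :=
  if odd i then 1 - 'X^(i.+1) else 1 + 'X^(i.+1).
Definition c3 (R : nzRingType) i : {poly R} :=
  if odd i then 1 + 'X^(3 * i.+1) else 1.

Lemma omega_id1 (R : comNzRingType) (c x : R) : c ^+ 2 + c + 1 = 0 ->
  (1 - c * x) * (1 - c ^+ 2 * x) * (1 - x) = 1 - x ^+ 3.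
Proof.
move=> hc.
have -> : (1 - c * x) * (1 - c ^+ 2 * x) * (1 - x) =
  1 - x ^+ 3 + (c ^+ 2 + c + 1) * (- x + c * x ^+ 2 - (c - 1) * x ^+ 3) by ring.
by rewrite hc mul0r addr0.
Qed.

Lemma omega_id2 (R : comNzRingType) (c x : R) : c ^+ 2 + c + 1 = 0 ->
  (1 + c * x) * (1 + c ^+ 2 * x) * (1 + x) = 1 + x ^+ 3.
Proof.
move=> hc.
have -> : (1 + c * x) * (1 + c ^+ 2 * x) * (1 + x) =
  1 + x ^+ 3 + (c ^+ 2 + c + 1) * (x + c * x ^+ 2 + (c - 1) * x ^+ 3) by ring.
by rewrite hc mul0r addr0.
Qed.

Lemma localQ (R : comNzRingType) (w : R) N i : w ^+ 2 + w + 1 = 0 ->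
  eqt N (Qf w N i * Df R i) (tauf R i * c3 R i).
Proof.
move=> hw; rewrite /Qf /Df /tauf /c3; case: (odd i).
  set x := ('X^(i.+1) : {poly R}).
  have hc : (w%:P) ^+ 2 + w%:P + 1 = 0 :> {poly R}.
    by rewrite -polyC_exp -!polyCD hw.
  have -> : ('X^(3 * i.+1) : {poly R}) = x ^+ 3 by rewrite /x -exprM mulnC.
  rewrite -(omega_id1 x hc) -(omega_id2 x hc) polyC_exp.
  have -> : gser N (w%:P * x) * gser N (w%:P ^+ 2 * x) *
     ((1 - w%:P * x) * (1 - w%:P ^+ 2 * x) * (1 - x) * (1 + x)) =
     ((1 - w%:P * x) * gser N (w%:P * x)) * ((1 - w%:P ^+ 2 * x) * gser N (w%:P ^+ 2 * x)) * ((1 - x) * (1 + x)) by ring.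
  have -> : (1 - x) * ((1 + w%:P * x) * (1 + w%:P ^+ 2 * x) * (1 + x)) =
     (1 + w%:P * x) * (1 + w%:P ^+ 2 * x) * ((1 - x) * (1 + x)) by ring.
  apply: eqtM; last exact: eqt_refl.
  apply: eqtM; first exact: eqt_gser.
  by rewrite -polyC_exp; apply: eqt_gser.
rewrite mulr1 mulrC; have := @eqt_gser R N 1 i.+1 (ltn0Sn i).
by rewrite polyC1 mul1r.
Qed.

Lemma localW (R : comNzRingType) N i : eqt N (Wf R N i * Df R i) (sigf R i * c3 R i).
Proof.
rewrite /Wf /Df /sigf /c3; case: (odd i); last by rewrite mul1r mulr1.
rewrite mulrA [X in eqt _ _ X]mulrC; apply: eqtM; last exact: eqt_refl.
rewrite mulrC; have := @eqt_gser R N 1 (3 * i.+1) (muln_gt0 _ _).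
by rewrite polyC1 mul1r.
Qed.

Lemma eqt_1pmX (R : comNzRingType) N m (b : bool) : (N < m)%N ->
  eqt N (if b then 1 + 'X^m else 1 - 'X^m : {poly R}) 1.
Proof.
move=> h; case: b; last exact: eqt_1X.
rewrite -[X in eqt _ _ X]addr0; apply: eqtD; first exact: eqt_refl.
rewrite -[X in eqt _ X _]mulr1; exact: eqt_Xn0.
Qed.

Lemma sig_star (R : idomainType) s :
  eqt s.+1 (Phi R s.+1 * \prod_(i < s.+1) sigf R i) (\prod_(i < s.+1) tauf R i).
Proof.
set N := s.+1.
have hs : forall F : nat -> {poly R}, (forall i, (N <= i)%N -> eqt N (F i) 1) ->
    eqt N (\prod_(i < N) F i) (\prod_(i < N.*2) F i).
  by move=> F hF; apply: eqt_sym; apply: eqt_prod_ext => //; rewrite -addnn leq_addr.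
have hsig : \prod_(i < N.*2) sigf R i = Bq R N * Ep R N.
  rewrite prod_split2 /Bq /Ep /sigf; congr (_ * _); apply: eq_bigr => j _.
    by rewrite odd_double.
  by rewrite /= odd_double.
have htau : \prod_(i < N.*2) tauf R i = Aq R N * Em R N.
  rewrite prod_split2 /Aq /Em /tauf; congr (_ * _); apply: eq_bigr => j _.
    by rewrite odd_double.
  by rewrite /= odd_double.
apply: (@eqt_trans _ _ _ (Phi R N * (Bq R N * Ep R N))).
  apply: eqtM; first exact: eqt_refl.
  rewrite -hsig; apply: hs => i hi; rewrite /sigf; apply: eqt_1pmX.
  by rewrite ltnS.
apply: (@eqt_trans _ _ _ (Aq R N * Em R N)).
  by rewrite mulrA; apply: star; rewrite -addnn leq_addr.
rewrite -htau; apply: eqt_sym; apply: hs => i hi; rewrite /tauf.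
have h : (N < i.+1)%N by rewrite ltnS.
by case: (odd i); [apply: eqt_1X | have := @eqt_1pmX R N _ true h].
Qed.

Lemma Df0 (R : comNzRingType) i : (Df R i)`_0 = 1.
Proof.
rewrite -horner_coef0 /Df; case: (odd i); rewrite !hornerE /= ?expr0n /= ?muln_eq0 /=;
  by rewrite ?subr0 ?addr0 ?mulr1.
Qed.

Lemma main_cong (R : idomainType) (w : R) s : w ^+ 2 + w + 1 = 0 ->
  eqt s.+1 (\prod_(i < s.+1) Qf w s.+1 i) (Phi R s.+1 * \prod_(i < s.+1) Wf R s.+1 i).
Proof.
move=> hw; set N := s.+1.
apply: (@eqt_cancel _ _ _ _ (\prod_(i < N) Df R i)).
  by rewrite coef0_prod; apply: big1 => i _; apply: Df0.
apply: (@eqt_trans _ _ _ (\prod_(i < N) tauf R i * \prod_(i < N) c3 R i)).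
  rewrite -!big_split /=; apply: eqt_prod => i _; exact: localQ.
apply: eqt_sym.
apply: (@eqt_trans _ _ _ (Phi R N * \prod_(i < N) sigf R i * \prod_(i < N) c3 R i)).
  rewrite -!mulrA -!big_split /=; apply: eqtM; first exact: eqt_refl.
  apply: eqt_prod => i _; exact: localW.
apply: eqtM; [exact: sig_star | exact: eqt_refl].
Qed.

Definition m3 (R : nzRingType) (p : {poly R}) := forall j, (j %% 3 != 0)%N -> p`_j = 0.

Lemma m3M (R : nzRingType) (p q : {poly R}) : m3 p -> m3 q -> m3 (p * q).
Proof.
move=> hp hq j hj; rewrite coefM; apply: big1 => [[i hi]] _ /=.
have [h|h] := boolP (i %% 3 != 0)%N; first by rewrite hp ?mul0r.
rewrite hq ?mulr0 //; move: h hj hi; rewrite ltnS; lia.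
Qed.

Lemma m3_prod (R : nzRingType) (I : Type) (r : seq I) (P : pred I) (F : I -> {poly R}) :
  (forall i, P i -> m3 (F i)) -> m3 (\prod_(i <- r | P i) F i).
Proof.
move=> h; apply: (big_ind (@m3 R)) => //; last exact: m3M.
by move=> j hj; rewrite coef1; case: j hj.
Qed.

Lemma m3_gser (R : nzRingType) N k : m3 (gser N (1%:P * 'X^(3 * k)) : {poly R}).
Proof.
move=> j hj; rewrite /gser coef_sum; apply: big1 => a _.
rewrite polyC1 mul1r -exprM.
have -> : (if nat_of_ord a == 0%N then 1 else 2%:R) * ('X^(3 * k * a) : {poly R}) =
   'X^(3 * k * a) *+ (if nat_of_ord a == 0%N then 1 else 2)%N.
  by case: ifP => _; rewrite ?mul1r ?mulr_natl.
rewrite coefMn coefXn.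
case: eqP => [e|]; last by rewrite mul0rn.
by move: hj; rewrite e; lia.
Qed.

Lemma sq_mod3 d : (expn d 2 %% 3 != 2)%N.
Proof.
rewrite -modnXm; have : (d %% 3 < 3)%N by rewrite ltn_mod.
by case: (d %% 3)%N => [|[|[|]]].
Qed.

Lemma coef_PhiW (R : nzRingType) r N (W : {poly R}) : (N %% 3 = 2)%N -> m3 W ->
  (Phi R r * W)`_N = 0.
Proof.
move=> hN hW; rewrite coefM; apply: big1 => [[i hi]] _ /=.
have [h|h] := boolP ((N - i) %% 3 != 0)%N; first by rewrite hW ?mulr0.
rewrite /Phi coef_sum big1 ?mul0r // => k _; rewrite coefXn.
case: eqP => [e|]; last by [].
have := sq_mod3 (dist k r); rewrite -e.
move: h hi; rewrite ltnS; lia.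
Qed.

Definition alpha (R : nzRingType) (w : R) N (i : 'I_N) (x : 'I_N.+1 * bool) : {poly R} :=
  if x.2 ==> (0 < x.1)%N then (w ^+ (odd i * x.1))%:P * 'X^(i.+1 * x.1) else 0.
Definition beta (R : nzRingType) (w : R) N (i : 'I_N) (x : 'I_N.+1 * bool) : {poly R} :=
  if (x.2 ==> (0 < x.1)%N) && (~~ odd i ==> (nat_of_ord x.1 == 0%N))
  then (w ^+ (2 * x.1))%:P * 'X^(i.+1 * x.1) else 0.

Lemma sum_pairb (R : nzRingType) N (F : 'I_N.+1 -> bool -> {poly R}) :
  \sum_(x : 'I_N.+1 * bool) F x.1 x.2 = \sum_(a < N.+1) (F a true + F a false).
Proof. by rewrite -pair_bigA; apply: eq_bigr => a _; rewrite big_bool. Qed.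

Lemma sum_alpha (R : comNzRingType) (w : R) N (i : 'I_N) :
  \sum_x alpha w i x = gser N ((w ^+ odd i)%:P * 'X^(i.+1)).
Proof.
rewrite (sum_pairb (fun a b => alpha w i (a, b))) /gser; apply: eq_bigr => a _.
rewrite /alpha /= exprMn -polyC_exp -exprM -exprM.
case: eqP => [->|/eqP ha]; first by rewrite /= add0r mul1r.
by rewrite lt0n ha /= mulr_natl mulr2n.
Qed.

Lemma sum_beta (R : comNzRingType) (w : R) N (i : 'I_N) :
  \sum_x beta w i x = if odd i then gser N ((w ^+ 2)%:P * 'X^(i.+1)) else 1.
Proof.
rewrite (sum_pairb (fun a b => beta w i (a, b))).
case: (boolP (odd i)) => hi.
  rewrite /gser; apply: eq_bigr => a _.
  rewrite /beta /= hi /= !andbT exprMn -polyC_exp -!exprM.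
  case: eqP => [->|/eqP ha]; first by rewrite /= add0r mul1r.
  by rewrite lt0n ha /= mulr_natl mulr2n.
rewrite big_ord_recl /= big1.
  by rewrite /beta /= hi /= !muln0 !expr0 polyC1 mulr1 add0r addr0.
move=> a _; rewrite /beta /= hi /=.
by rewrite addr0.
Qed.

Lemma prod_if (R : comNzRingType) (I : finType) (P : pred I) (F : I -> R) :
  \prod_i (if P i then F i else 0) = if [forall i, P i] then \prod_i F i else 0.
Proof.
case: ifP => h.
  by apply: eq_bigr => i _; rewrite (forallP h i).
move/negbT: h; rewrite negb_forall => /existsP [i hi].
by rewrite (bigD1 i) //= (negbTE hi) mul0r.
Qed.

Lemma prod_monom (R : comNzRingType) (w : R) (I : finType) (e k : I -> nat) :
  \prod_i ((w ^+ e i)%:P * 'X^(k i)) = (w ^+ (\sum_i e i))%:P * 'X^(\sum_i k i).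
Proof. by rewrite big_split /= -rmorph_prod /= !prodrXr. Qed.

Lemma prod_alpha (R : comNzRingType) (w : R) N (f : ovp N) :
  \prod_i alpha w i (f i) =
  if ovp_valid f then (w ^+ ovp_even_len f)%:P * 'X^(ovp_weight f) else 0.
Proof.
rewrite /alpha prod_if prod_monom /ovp_valid; case: ifP => // _.
congr ((w ^+ _)%:P * _); rewrite /ovp_even_len.
rewrite [RHS]big_mkcond /=.
by apply: eq_bigr => i _; case: (odd i); rewrite ?mul1n ?mul0n.
Qed.

Lemma prod_beta (R : comNzRingType) (w : R) N (g : ovp N) :
  \prod_i beta w i (g i) =
  if ovp_valid g && ovp_only_even g then (w ^+ (2 * ovp_len g))%:P * 'X^(ovp_weight g) else 0.
Proof.
rewrite /beta prod_if prod_monom.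
have -> : [forall i, ((g i).2 ==> (0 < (g i).1)%N) && (~~ odd i ==> (nat_of_ord (g i).1 == 0%N))]
   = ovp_valid g && ovp_only_even g.
  apply/forallP/andP => [h|[/forallP h1 /forallP h2] i].
    by split; apply/forallP => i; have /andP [] := h i.
  by rewrite h1 h2.
case: ifP => // _; congr ((w ^+ _)%:P * _).
by rewrite /ovp_len big_distrr.
Qed.

Lemma stepA (R : comNzRingType) (w : R) N :
  \sum_(p : ovp N * ovp N | overcubic p) w ^+ (ovp_even_len p.1 + 2 * ovp_len p.2)
  = (\prod_(i < N) Qf w N i)`_N.
Proof.
have E : \prod_(i < N) Qf w N i =
   \sum_(p : ovp N * ovp N) (\prod_i alpha w i (p.1 i) * \prod_i beta w i (p.2 i)).
  rewrite -(pair_bigA _ (fun f g : ovp N => \prod_i alpha w i (f i) * \prod_i beta w i (g i))) /=.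
  rewrite (eq_bigr (fun f : ovp N => \prod_i alpha w i (f i) * \sum_(g : ovp N) \prod_i beta w i (g i))); last first.
    by move=> f _; rewrite mulr_sumr.
  rewrite -mulr_suml -!bigA_distr_bigA /= -big_split /=.
  apply: eq_bigr => i _; rewrite sum_alpha sum_beta /Qf.
  by case: (odd i); rewrite ?expr1 ?expr0 ?mulr1.
rewrite E coef_sum [LHS]big_mkcond /=; apply: eq_bigr => [[f g]] _ /=.
rewrite prod_alpha prod_beta /overcubic /=.
case: (ovp_valid f); last by rewrite mul0r coef0 /=.
case: (ovp_valid g); case: (ovp_only_even g) => /=; try by rewrite mulr0 coef0.
rewrite mulrACA -polyCM -exprD -exprD coefCM coefXn /=.
by rewrite eq_sym; case: eqP; rewrite ?mulr1 ?mulr0.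
Qed.

Definition mexp N (p : ovp N * ovp N) : nat := (ovp_even_len p.1 + 2 * ovp_len p.2)%N.

Lemma crank_mod N (p : ovp N * ovp N) (j : nat) : (j < 3)%N ->
  ((crank p == j%:Z %[mod (3%N)%:Z])%Z) = (mexp p %% 3 == j)%N.
Proof.
move=> hj; rewrite /crank /mexp.
set e := ovp_even_len p.1; set l := ovp_len p.2.
have -> : (e%:Z - l%:Z = (- l%:Z) * 3%:Z + (e + 2 * l)%N%:Z)%R.
  rewrite PoszD PoszM; ring.
rewrite modzMDl !modz_nat (modn_small hj).
by apply/eqP/eqP => [[]|->].
Qed.

Lemma partition3 (R : comNzRingType) (w : R) N : w ^+ 3 = 1 ->
  \sum_(p : ovp N * ovp N | overcubic p) w ^+ mexp p =
  (Cbar (Posz 0) 3 N)%:R + (Cbar (Posz 1) 3 N)%:R * w + (Cbar (Posz 2) 3 N)%:R * w ^+ 2.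
Proof.
move=> hw.
pose A (j : nat) := [set p : ovp N * ovp N | overcubic p & (crank p == j%:Z %[mod (3%N)%:Z])%Z].
have step : forall p : ovp N * ovp N, overcubic p ->
    w ^+ mexp p = \sum_(j < 3) (if p \in A j then w ^+ j else 0).
  move=> p hp; rewrite !big_ord_recr big_ord0 /= add0r !inE hp /=.
  rewrite !crank_mod //.
  rewrite {1}(divn_eq (mexp p) 3) exprD mulnC exprM hw expr1n mul1r.
  have : (mexp p %% 3 < 3)%N by rewrite ltn_mod.
  by case: (mexp p %% 3)%N => [|[|[|]]] //= _; rewrite ?addr0 ?add0r ?expr0 ?expr1.
rewrite (eq_bigr _ step) exchange_big /=.
rewrite !big_ord_recr big_ord0 /= add0r.
have hs : forall j : nat, \sum_(p | overcubic p) (if p \in A j then w ^+ j else 0) = (#|A j|)%:R * w ^+ j.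
  move=> j; rewrite -big_mkcondr /=.
  rewrite (eq_bigl (fun p => p \in A j)); last first.
    by move=> p; rewrite !inE; case: (overcubic p).
  by rewrite sumr_const mulr_natl.
by rewrite !hs expr0 expr1 mulr1.
Qed.

Lemma omega_exists : exists w : algC, w ^+ 2 + w + 1 = 0.
Proof.
have [x hx] := @solve_monicpoly algC 2 (fun _ => -1) isT.
exists x; rewrite hx !big_ord_recr big_ord0 /= add0r expr0 expr1; ring.
Qed.

Lemma indep (w : algC) (c0 c1 c2 : nat) : w ^+ 2 + w + 1 = 0 ->
  c0%:R + c1%:R * w + c2%:R * w ^+ 2 = 0 -> c0 = c1 /\ c1 = c2.
Proof.
move=> hw h.
pose a : int := c0%:Z - c2%:Z; pose b : int := c1%:Z - c2%:Z.
have h3 : w ^+ 3 = 1.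
  have -> : w ^+ 3 = 1 + (w - 1) * (w ^+ 2 + w + 1) by ring.
  by rewrite hw mulr0 addr0.
have e1 : a%:~R + b%:~R * w = 0 :> algC.
  rewrite /a /b !rmorphB /= -!pmulrn.
  have hw2 : w ^+ 2 = - 1 - w.
    by apply/eqP; rewrite -subr_eq0 -hw; apply/eqP; ring.
  by rewrite hw2 in h; rewrite -h; ring.
have e2 : ((a * a - a * b + b * b)%:~R : algC) = 0.
  have -> : ((a * a - a * b + b * b)%:~R : algC) =
     (a%:~R + b%:~R * w) * (a%:~R + b%:~R * w ^+ 2) - a%:~R * b%:~R * (w ^+ 2 + w + 1)
     - b%:~R ^+ 2 * (w ^+ 3 - 1).
    rewrite rmorphD rmorphB /= !rmorphM /=; ring.
  by rewrite e1 hw h3 subrr !mul0r !mulr0 !subr0.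
move/eqP: e2; rewrite intr_eq0 => /eqP e2.
have : a = 0 /\ b = 0 by nia.
rewrite /a /b => [[ha hb]].
by split; lia.
Qed.

Lemma sum_one_int (T : finType) (P : pred T) : \sum_(i | P i) (1 : int) = #|P|%:Z.
Proof.
rewrite (_ : \sum_(i | P i) (1 : int) = \sum_(i in P) 1) //.
by rewrite sumr_const natz.
Qed.

Definition oddp (R : nzRingType) (p : {poly R}) := exists h, p = 1 + 2%:R * h.

Lemma oddpM (R : comNzRingType) (p q : {poly R}) : oddp p -> oddp q -> oddp (p * q).
Proof.
move=> [a ->] [b ->]; exists (a + b + 2%:R * a * b); ring.
Qed.

Lemma oddp_gser (R : comNzRingType) N (u : {poly R}) : oddp (gser N u).
Proof.
exists (\sum_(i < N) u ^+ i.+1).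
rewrite /gser big_ord_recl /= expr0 mulr1 mulr_sumr; congr (_ + _).
Qed.

Lemma abar_even N : (0 < N)%N -> (2 %| abar N)%N.
Proof.
move=> hN.
have hA := stepA (1 : int) N.
have hO : oddp (\prod_(i < N) Qf (1 : int) N i).
  apply: (big_ind (@oddp _)); [by exists 0; rewrite mulr0 addr0 | exact: oddpM |].
  move=> i _; rewrite /Qf; case: (odd i); last exact: oddp_gser.
  by apply: oddpM; apply: oddp_gser.
case: hO => h hh; rewrite hh coefD coef1 mulr_natl coefMn in hA.
have hN0 : (N == 0%N) = false by apply/negbTE; rewrite -lt0n.
rewrite hN0 add0r in hA.
have e : ((abar N)%:Z = (h`_N) *+ 2)%R.
  rewrite -hA; under eq_bigr do rewrite expr1n.
  rewrite sum_one_int /abar; congr Posz; apply: eq_card => p; by rewrite !inE.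
move: e; rewrite -mulr_natl; set z := h`_N; lia.
Qed.

Lemma final_aux s : ((s.+1) %% 3 = 2)%N ->
  Cbar (Posz 0) 3 s.+1 = Cbar (Posz 1) 3 s.+1 /\ Cbar (Posz 1) 3 s.+1 = Cbar (Posz 2) 3 s.+1 /\
  abar s.+1 = (3 * Cbar (Posz 2) 3 s.+1)%N /\ (2 %| abar s.+1)%N.
Proof.
move=> hmod; set N := s.+1.
have [w hw] := omega_exists.
have h3 : w ^+ 3 = 1.
  have -> : w ^+ 3 = 1 + (w - 1) * (w ^+ 2 + w + 1) by ring.
  by rewrite hw mulr0 addr0.
have hS : \sum_(p : ovp N * ovp N | overcubic p) w ^+ mexp p = 0.
  rewrite /mexp stepA (main_cong hw (leqnn N)).
  apply: coef_PhiW => //; apply: m3_prod => i _; rewrite /Wf.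
  by case: (odd i); [apply: m3_gser | move=> j; rewrite coef1; case: j].
rewrite partition3 // in hS.
have [e01 e12] := indep hw hS.
have hab : abar N = (Cbar (Posz 0) 3 N + Cbar (Posz 1) 3 N + Cbar (Posz 2) 3 N)%N.
  have := @partition3 int 1 N (expr1n _ _).
  under eq_bigr do rewrite expr1n.
  rewrite sum_one_int !expr1n !mulr1 !natz => e.
  apply/eqP; rewrite -eqz_nat !PoszD -e /abar; apply/eqP; congr Posz.
  by apply: eq_card => p; rewrite !inE.
split => //; split => //; split; first by rewrite hab e01 e12; lia.
exact: abar_even.
Qed.

Local Close Scope ring_scope.

Theorem theorem3p2 (n : nat) :
  [/\ Cbar 0 3 (3 * n + 2) = Cbar 1 3 (3 * n + 2),
      Cbar 1 3 (3 * n + 2) = Cbar 2 3 (3 * n + 2),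
      (3 %| abar (3 * n + 2))%N,
      Cbar 2 3 (3 * n + 2) = (abar (3 * n + 2) %/ 3)%N
    & (2 %| abar (3 * n + 2) %/ 3)%N].
Proof.
have -> : (3 * n + 2 = (3 * n + 1).+1)%N by rewrite addnS.
have hm : (((3 * n + 1).+1) %% 3 = 2)%N by lia.
have [e01 [e12 [hab h2]]] := final_aux hm.
split => //.
- by rewrite hab dvdn_mulr.
- by rewrite hab mulKn.
- by rewrite hab mulKn //; move: h2; rewrite hab; lia.
Qed.
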